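(* Let $W$ be a finite set of possible worlds and let $G=(2^W,\gg)$ and $G'=(2^W,\gg')$ be complete belief algebras on $W$. Then: (1) $\operatorname{Gen}(\Omega)=G$, where $\Omega=\{(\{\omega\},\{\omega'\})\mid \omega,\omega'\in W,\ \{\omega\}\gg\{\omega'\}\}$; (2) if for all $\omega,\omega'\in W$ we have $(\{\omega\},\{\omega'\})\in G$ iff $(\{\omega\},\{\omega'\})\in G'$, then $G=G'$.
   Context: $R_W=\{(U,V)\mid U,V\subseteq W,\ U\cap V=\varnothing\}$. A belief algebra on $W$ is a pair $(2^W,\gg)$, $\gg$ a binary relation on $2^W$, such that for all $U,V,U_1,V_1,U_2,V_2\subseteq W$: (A0) $\gg\subseteq R_W$; (A1) $U\gg\varnothing$ iff $U\neq\varnothing$; (A2) if $U\gg V$ then not $V\gg U$; (A3) if $U_1\supseteq U$, $U\gg V$, $V\supseteq V_1$ and $U_1\cap V_1=\varnothing$, then $U_1\gg V_1$; (A4) if $U=U_1\cup V_1=U_2\cup V_2$, $U_1\gg V_1$ and $U_2\gg V_2$, then $U_1\cap U_2\gg V_1\cup V_2$. A belief algebra is identified with its relation as a set of pairs. A complete belief algebra (CBA) is a belief algebra of the form $U\gg V$ iff $U\cap V=\varnothing$ and there is $\omega_1\in U$ with $\omega_1\prec\omega_2$ for all $\omega_2\in V$, for some total preorder $\preceq$ on $W$ (where $\omega\prec\omega'$ iff $\omega\preceq\omega'$ and not $\omega'\preceq\omega$). For $\Omega\subseteq R_W$, $\operatorname{Gen}(\Omega)$ is the smallest subset of $R_W$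 that contains $\Omega$, contains $(U,\varnothing)$ for every nonempty $U\subseteq W$, and is closed under: if $(U,V)$ is in it, $U\subseteq U_1$, $V_1\subseteq V$ and $U_1\cap V_1=\varnothing$, then $(U_1,V_1)$ is in it; if $U_1\cup V_1=U_2\cup V_2$ and $(U_1,V_1),(U_2,V_2)$ are in it, then $(U_1\cap U_2,V_1\cup V_2)$ is in it. *)

(* Defs.v *)
From mathcomp Require Import all_boot.
Set Implicit Arguments. Unset Strict Implicit. Unset Printing Implicit Defensive.

(* A binary relation on 2^W, identified with the set of pairs it relates. *)
Definition brel (W : finType) := {set W} -> {set W} -> Prop.

Definition belief_algebra (W : finType) (G : brel W) : Prop :=
  (forall U V : {set W}, G U V -> [disjoint U & V]) /\
  (forall U : {set W}, G U set0 <-> U != set0) /\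
  (forall U V : {set W}, G U V -> ~ G V U) /\
  (forall U V U1 V1 : {set W}, U \subset U1 -> G U V -> V1 \subset V ->
              [disjoint U1 & V1] -> G U1 V1) /\
  (forall U U1 V1 U2 V2 : {set W}, U = U1 :|: V1 -> U = U2 :|: V2 ->
              G U1 V1 -> G U2 V2 -> G (U1 :&: U2) (V1 :|: V2)).

Definition total_preorder (W : finType) (le : W -> W -> Prop) : Prop :=
  (forall x, le x x) /\ (forall x y z, le x y -> le y z -> le x z) /\
  (forall x y, le x y \/ le y x).

Definition strict (W : finType) (le : W -> W -> Prop) (x y : W) : Prop :=
  le x y /\ ~ le y x.

Definition complete_belief_algebra (W : finType) (G : brel W) : Prop :=
  belief_algebra G /\
  exists le : W -> W -> Prop, total_preorder le /\
    forall U V : {set W}, G U V <->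
      ([disjoint U & V] /\
       exists w1, w1 \in U /\ forall w2, w2 \in V -> strict le w1 w2).

Inductive Gen (W : finType) (Om : brel W) : {set W} -> {set W} -> Prop :=
| Gen_base (U V : {set W}) : Om U V -> Gen Om U V
| Gen_empty (U : {set W}) : U != set0 -> Gen Om U set0
| Gen_weaken (U V U1 V1 : {set W}) : Gen Om U V -> U \subset U1 -> V1 \subset V ->
    [disjoint U1 & V1] -> Gen Om U1 V1
| Gen_meet (U1 V1 U2 V2 : {set W}) : U1 :|: V1 = U2 :|: V2 -> Gen Om U1 V1 -> Gen Om U2 V2 ->
    Gen Om (U1 :&: U2) (V1 :|: V2).

Definition singleton_part (W : finType) (G : brel W) : brel W :=
  fun U V => exists w w' : W, U = [set w] /\ V = [set w'] /\ G [set w] [set w'].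

(* Main.v *)
From Stdlib Require Import FunctionalExtensionality PropExtensionality.
Require Import Defs.
From mathcomp Require Import all_boot.


Lemma gen_sub (W : finType) (G : brel W) : belief_algebra G ->
  forall U V, Gen (singleton_part G) U V -> G U V.
Proof.
move=> [A0 [A1 [A2 [A3 A4]]]] U V; elim.
- by move=> U0 V0 [w [w' [-> [-> H]]]].
- by move=> U0 /A1.
- move=> U0 V0 U1 V1 _ H s1 s2 d; exact: A3 s1 H s2 d.
- move=> U1 V1 U2 V2 e _ H1 _ H2; exact: (A4 (U1 :|: V1)).
Qed.

Lemma gen_single (W : finType) (Om : brel W) (w1 : W) : forall n (V : {set W}),
  #|V| = n -> w1 \notin V -> (forall w2, w2 \in V -> Om [set w1] [set w2]) ->
  Gen Om [set w1] V.
Proof.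
elim=> [|n IH] V hc hn hO.
  move/eqP: hc; rewrite cards_eq0 => /eqP ->; apply: Gen_empty.
  by apply/set0Pn; exists w1; rewrite inE.
have : 0 < #|V| by rewrite hc.
rewrite card_gt0 => /set0Pn [x xV].
have hc' : #|V :\ x| = n by move: hc; rewrite (cardsD1 x V) xV add1n => -[].
have xw : x != w1 by apply/eqP => e; move: hn; rewrite -e xV.
have IH' := IH (V :\ x) hc'.
have HB : Gen Om [set w1] (V :\ x).
  apply: IH'.
  - by rewrite !inE negb_and hn orbT.
  - by move=> w2; rewrite !inE => /andP [_ /hO].
have HA := Gen_weaken (Gen_base (hO x xV)) (subsetUl [set w1] (V :\ x)) (subxx [set x]).
have HB' := Gen_weaken HB (subsetUl [set w1] [set x]) (subxx (V :\ x)).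
have bc : forall y, [/\ (y == x) ==> (y \in V), (y == w1) ==> (y \notin V)
    & ~~ ((y == x) && (y == w1))].
  move=> y; split.
  - by apply/implyP => /eqP ->.
  - by apply/implyP => /eqP ->.
  - by apply/negP => /andP [/eqP -> /eqP e]; move: xw; rewrite e eqxx.
have d1 : [disjoint [set w1] :|: V :\ x & [set x]].
  rewrite -setI_eq0; apply/eqP/setP => y; rewrite !inE.
  by case: (bc y); case: (y == x); case: (y == w1); case: (y \in V).
have d2 : [disjoint [set w1] :|: [set x] & V :\ x].
  rewrite -setI_eq0; apply/eqP/setP => y; rewrite !inE.
  by case: (bc y); case: (y == x); case: (y == w1); case: (y \in V).
have e : ([set w1] :|: V :\ x) :|: [set x] = ([set w1] :|: [set x]) :|: V :\ x.
  apply/setP => y; rewrite !inE.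
  by case: (bc y); case: (y == x); case: (y == w1); case: (y \in V).
have H' := Gen_meet e (HA d1) (HB' d2).
apply: (Gen_weaken H').
- apply/subsetP => y; rewrite !inE.
  by case: (bc y); case: (y == x); case: (y == w1); case: (y \in V).
- apply/subsetP => y; rewrite !inE.
  by case: (bc y); case: (y == x); case: (y == w1); case: (y \in V).
- rewrite -setI_eq0; apply/eqP/setP => y; rewrite !inE.
  by case: (bc y); case: (y == x); case: (y == w1); case: (y \in V).
Qed.

Lemma part1 (W : finType) (G : brel W) : complete_belief_algebra G ->
  Gen (singleton_part G) = G.
Proof.
move=> [BA [le [_ HG]]].
apply: functional_extensionality => U; apply: functional_extensionality => V.
apply: propositional_extensionality; split; first exact: gen_sub.
move=> /HG [d [w1 [w1U hs]]].
have hn : w1 \notin V by apply/negP => /hs [].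
have g := @gen_single W (singleton_part G) w1 #|V| V erefl hn.
have G1 : Gen (singleton_part G) [set w1] V.
  apply: g => w2 w2V; exists w1, w2; split => //; split => //.
  apply/HG; split.
    rewrite -setI_eq0; apply/eqP/setP => y; rewrite !inE.
    case: (y =P w1) => [->|] //=; apply/negP => /eqP e.
    by move: (hs _ w2V); rewrite -e => -[].
  by exists w1; rewrite inE eqxx; split => // w /[!inE] /eqP ->; apply: hs.
by apply: (Gen_weaken G1) => //; rewrite sub1set.
Qed.

Theorem corollary1 (W : finType) (G G' : brel W) :
  complete_belief_algebra G -> complete_belief_algebra G' ->
  Gen (singleton_part G) = G /\
  ((forall w w' : W, G [set w] [set w'] <-> G' [set w] [set w']) -> G = G').
Proof.
move=> hG hG'; split; first exact: (@part1 _ _ hG).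
move=> hw; rewrite -(@part1 _ _ hG) -(@part1 _ _ hG'); f_equal.
apply: functional_extensionality => U; apply: functional_extensionality => V.
apply: propositional_extensionality; split;
  move=> [w [w' [-> [-> h]]]]; exists w, w'; do 2 split => //; by apply/hw.
Qed.
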